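(* Let $R$ be a standard rule and let $(N,c,E,h)$ be a historical claims problem, with history-adjusted claims vector $\widetilde{c}$. Then there exists $\overline{\lambda}\in\mathbb{R}_+$ such that $$\sum_{i\in N}\min\left\{c_i,\,R_i(N,\widetilde{c},E)+\overline{\lambda}\right\}=E.$$ Moreover, if $C=\sum_{i\in N}c_i>E$, then such $\overline{\lambda}$ is unique; whereas if $C=E$, such $\overline{\lambda}$ is not unique, but the vector $\left(\min\{c_i,R_i(N,\widetilde{c},E)+\overline{\lambda}\}\right)_{i\in N}$ is the same for all such $\overline{\lambda}$.
   Context: Agents are elements of $\mathbb{N}$; $N$ denotes a nonempty finite subset of $\mathbb{N}$. A (standard) claims problem is a triple $(N,c,E)$ with $c\in\mathbb{R}_+^N$, $E\in\mathbb{R}_+$, $C=\sum_{i\in N}c_i>0$ and $E\le C$. An allocation for it is $x\in\mathbb{R}^N$ with $0\le x_i\le c_i$ for all $i$ and $\sum_{i\in N}x_i=E$. A standard rule $R$ assigns to every standard claims problem $(N,c,E)$ an allocation $R(N,c,E)$. A history for $N$ is a finite sequence $h=\{(c^{(t)},x^{(t)})\}_{t=1}^{|T|}$ where, for each $t$, $c^{(t)}\in\mathbb{R}_+^N$ and $x^{(t)}$ is an allocation of the standard claims problem $(N,c^{(t)},\sum_{i}x^{(t)}_i)$ (in particular $0\le x_i^{(t)}\le c_i^{(t)}$). A historical claims problem is a 4-tuple $(N,c,E,h)$ where $(N,c,E)$ is a standard claims problem and $h$ is a history for $N$. For each $i\in N$ let $\Delta^c_i=\sum_{t=1}^{|T|}c_i^{(t)}$,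 $\Delta^x_i=\sum_{t=1}^{|T|}x_i^{(t)}$, and the history-adjusted claim $\widetilde{c}_i=c_i+\Delta^c_i-\Delta^x_i$ (so $\widetilde{c}\ge c$ and $(N,\widetilde{c},E)$ is a standard claims problem). *)

(* Defs.v *)
From HB Require Import structures.
From mathcomp Require Import all_boot all_order all_algebra.
From mathcomp Require Import finmap.
From mathcomp Require Import reals.
Set Implicit Arguments. Unset Strict Implicit. Unset Printing Implicit Defensive.
Import Order.TTheory GRing.Theory Num.Theory.
Local Open Scope ring_scope.
Local Open Scope fset_scope.

Section Claims.
Variable R : realType.

(* Claims / allocation vectors are functions nat -> R; only values on N matter. *)
Definition sum_over (N : {fset nat}) (v : nat -> R) : R := \sum_(i <- N) v i.

Definition standard_problem (N : {fset nat}) (c : nat -> R) (E : R) : Prop :=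
  [/\ N != fset0, (forall i, i \in N -> 0 <= c i), 0 <= E,
      0 < sum_over N c & E <= sum_over N c].

Definition allocation (N : {fset nat}) (c : nat -> R) (E : R) (x : nat -> R) : Prop :=
  (forall i, i \in N -> 0 <= x i <= c i) /\ sum_over N x = E.

Definition standard_rule
  (Rl : {fset nat} -> (nat -> R) -> R -> (nat -> R)) : Prop :=
  forall N c E, standard_problem N c E -> allocation N c E (Rl N c E).

Definition history (N : {fset nat}) (h : seq ((nat -> R) * (nat -> R))) : Prop :=
  forall t, (t < size h)%N ->
    let p := nth (fun _ => 0, fun _ => 0) h t in
    standard_problem N p.1 (sum_over N p.2) /\ allocation N p.1 (sum_over N p.2) p.2.

Definition adjusted_claims (c : nat -> R) (h : seq ((nat -> R) * (nat -> R)))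
  : nat -> R :=
  fun i => c i + \sum_(p <- h) p.1 i - \sum_(p <- h) p.2 i.

End Claims.

(* Main.v *)
Require Import Defs.
From HB Require Import structures.
From mathcomp Require Import all_boot all_order all_algebra.
From mathcomp Require Import finmap.
From mathcomp Require Import reals boolp topology normedtype.
From mathcomp Require Import lra.
Import numFieldNormedType.Exports.
Import Order.TTheory GRing.Theory Num.Theory.
Local Open Scope ring_scope.
Lemma cont_sum (R : realType) (s : seq nat) (c x : nat -> R) :
  continuous (fun l : R => \sum_(i <- s) Num.min (c i) (x i + l)).
Proof.
elim: s => [|a s IH] l.
  have -> : (fun l : R => \sum_(i <- [::]) Num.min (c i) (x i + l)) = fun=> 0.
    by apply/funext => y; rewrite big_nil.
  exact: cvg_cst.
have -> : (fun l : R => \sum_(i <- a :: s) Num.min (c i) (x i + l)) =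
   (fun l => Num.min (c a) (x a + l) + \sum_(i <- s) Num.min (c i) (x i + l)).
  by apply/funext => y; rewrite big_cons.
apply: (@continuousD R R^o _ (fun l => Num.min (c a) (x a + l)) (fun l => \sum_(i <- s) Num.min (c i) (x i + l))).
  apply: (continuous_min (f := fun=> c a) (g := fun l => x a + l)).
    exact: cvg_cst.
  apply: (@continuousD R R^o _ (fun=> x a) (fun l : R => l)); first exact: cvg_cst. exact: cvg_id.
exact: IH.
Qed.


Lemma hist_le (R : realType) (N : {fset nat}) (h : seq ((nat -> R) * (nat -> R))) :
  history N h -> forall i, i \in N ->
  \sum_(p <- h) p.2 i <= \sum_(p <- h) p.1 i.
Proof.
elim: h => [|a h IH] Hh i Hi; first by rewrite !big_nil.
rewrite !big_cons; apply: lerD.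
  have [_ [Ha _]] := Hh 0%N isT.
  by have /andP[_] := Ha i Hi.
apply: IH => // t Ht; exact: (Hh t.+1).
Qed.

Lemma sum_eq_termwise (R : realType) (s : seq nat) (F G : nat -> R) :
  (forall i, i \in s -> F i <= G i) ->
  \sum_(i <- s) F i = \sum_(i <- s) G i -> forall i, i \in s -> F i = G i.
Proof.
elim: s => [|a s IH] Hle Hs i //.
rewrite !big_cons in Hs.
have Ha : F a <= G a by apply: Hle; rewrite mem_head.
have Hss : \sum_(j <- s) F j <= \sum_(j <- s) G j.
  rewrite big_seq [X in _ <= X]big_seq; apply: ler_sum => j Hj.
  by apply: Hle; rewrite in_cons Hj orbT.
have Hae : F a = G a by apply/eqP; rewrite eq_le Ha /=; lra.
rewrite in_cons => /orP[/eqP -> //|Hi].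
apply: IH => //.
  by move=> j Hj; apply: Hle; rewrite in_cons Hj orbT.
lra.
Qed.

Lemma min_mono (R : realType) (a b l1 l2 : R) : l1 <= l2 ->
  Num.min a (b + l1) <= Num.min a (b + l2).
Proof.
move=> H; rewrite le_min ge_min lexx /= ge_min; apply/orP; right.
by rewrite lerD2l.
Qed.

Lemma le_sum_N (R : realType) (N : {fset nat}) (c : nat -> R) i :
  (forall j, j \in N -> 0 <= c j) -> i \in N -> c i <= \sum_(j <- N) c j.
Proof.
move=> H Hi; rewrite (bigD1_seq i Hi (fset_uniq N)) /= lerDl.
rewrite big_seq_cond; apply: sumr_ge0 => j /andP[Hj _]; exact: H.
Qed.

Theorem proposition1 (R : realType)
  (Rl : {fset nat} -> (nat -> R) -> R -> (nat -> R))
  (N : {fset nat}) (c : nat -> R) (E : R) (h : seq ((nat -> R) * (nat -> R))) :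
  standard_rule Rl ->
  standard_problem N c E ->
  history N h ->
  let ct := adjusted_claims c h in
  let sol := fun lam : R =>
    0 <= lam /\ \sum_(i <- N) Num.min (c i) (Rl N ct E i + lam) = E in
  (exists lam, sol lam) /\
  (E < sum_over N c -> forall l1 l2, sol l1 -> sol l2 -> l1 = l2) /\
  (sum_over N c = E ->
     (exists l1 l2, sol l1 /\ sol l2 /\ l1 <> l2) /\
     (forall l1 l2, sol l1 -> sol l2 -> forall i, i \in N ->
        Num.min (c i) (Rl N ct E i + l1) = Num.min (c i) (Rl N ct E i + l2))).
Proof.
move=> HR [HN Hc HE HC HEC] Hh ct sol.
have Hct : forall i, i \in N -> c i <= ct i.
  move=> i Hi; rewrite /ct /adjusted_claims.
  have := @hist_le R N h Hh i Hi; lra.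
have HCt : sum_over N c <= sum_over N ct.
  rewrite /sum_over big_seq [X in _ <= X]big_seq; apply: ler_sum => i Hi.
  exact: Hct.
have [Hx Hsx] : allocation N ct E (Rl N ct E).
  apply: HR; split => //.
  - by move=> i Hi; apply: le_trans (Hct i Hi); apply: Hc.
  - exact: lt_le_trans HCt.
  - exact: le_trans HCt.
set x := Rl N ct E in Hx Hsx *.
pose C := sum_over N c.
pose f := fun l : R => \sum_(i <- N) Num.min (c i) (x i + l).
have fC : forall l, C <= l -> f l = C.
  move=> l Hl; rewrite /f /C /sum_over big_seq [RHS]big_seq.
apply: eq_bigr => i Hi. have Hci := @le_sum_N R N c i Hc Hi. have /andP[Hx0 _] := Hx i Hi. rewrite -/(sum_over N c) -/C in Hci. have Hle : c i <= x i + l by lra. by rewrite (min_l Hle).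
have f0 : f 0 <= E.
  rewrite -Hsx /f /sum_over big_seq [X in _ <= X]big_seq; apply: ler_sum => i Hi.
  by rewrite addr0 ge_min lexx orbT.
have C0 : 0 <= C by rewrite /C; lra.
have termeq : forall l1 l2, sol l1 -> sol l2 -> forall i, i \in N ->
        Num.min (c i) (x i + l1) = Num.min (c i) (x i + l2).
  have key : forall l1 l2, l1 <= l2 -> sol l1 -> sol l2 -> forall i, i \in N ->
        Num.min (c i) (x i + l1) = Num.min (c i) (x i + l2).
    move=> l1 l2 Hl [_ S1] [_ S2]; apply: sum_eq_termwise.
      by move=> i _; apply: min_mono.
    by rewrite S1 S2.
  move=> l1 l2 S1 S2 i Hi; case: (leP l1 l2) => Hl.
    exact: key.
  by symmetry; apply: key => //; apply: ltW.
split.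
  have [l Hl fl] : exists2 l, l \in `[0, C] & f l = E.
    apply: IVT => //.
      apply: continuous_subspaceT; exact: cont_sum.
    rewrite (fC C (lexx C)) ge_min f0 /= le_max.
    by rewrite -/(sum_over N c) -/C HEC orbT.
  exists l; split => //.
  by move: Hl; rewrite in_itv /= => /andP[].
split.
  move=> HlC l1 l2 S1 S2.
  apply: contrapT => Hne.
  wlog Hlt : l1 l2 S1 S2 Hne / l1 < l2.
    move=> W; case: (ltgtP l1 l2) => H.
    - exact: (W l1 l2).
    - by apply: (W l2 l1) => // E'; apply: Hne.
    - by apply: Hne.
  have Hall : forall i, i \in N -> Num.min (c i) (x i + l1) = c i.
    move=> i Hi; have := termeq l1 l2 S1 S2 i Hi.
    case/boolP: (c i <= x i + l1) => H1; first by move=> _; rewrite (min_l H1).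
    rewrite -ltNge in H1.
    rewrite (min_r (ltW H1)) => H2.
    exfalso; move: H2; case/boolP: (c i <= x i + l2) => H3.
      rewrite (min_l H3) => H4; lra.
    rewrite -ltNge in H3.
    rewrite (min_r (ltW H3)) => H4; lra.
  have : \sum_(i <- N) Num.min (c i) (x i + l1) = sum_over N c.
    rewrite /sum_over big_seq [RHS]big_seq; apply: eq_bigr => i Hi; exact: Hall.
  case: S1 => _ ->; lra.
move=> HCE; split; last exact: termeq.
exists C, (C + 1); split; last split.
- split => //; rewrite -/x -HCE; exact: (fC C (lexx C)).
- split; first lra.
  rewrite -/x -HCE; apply: (fC (C + 1)); lra.
- lra.
Qed.
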